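(* Let $f$ and $g$ be multiplicative functions on $W_{\infty\infty}$ (with values in a commutative ring containing $\mathbf{Q}$, e.g. $\mathbf{C}$), and let $F(x,y)=\sum_{i,j\ge0}f_{ij}x^iy^j$, $G(x,y)=\sum_{i,j\ge0}g_{ij}x^iy^j$, $(F*G)(x,y)=\sum_{i,j\ge0}(f*g)_{ij}x^iy^j$ as formal power series. Let $F_0=F(x,0)$, $G_0=G(0,y)$, $\tilde F(x,y)=F(x,G_0\,y)$ and $\tilde G(x,y)=G(F_0\,x,y)$. Then $$\frac{1}{F*G}=\frac{1}{\tilde F\,G_0}+\frac{1}{F_0\,\tilde G}-\frac{1}{F_0\,G_0}.$$
   Context: $W_{\infty\infty}$ is the poset of shuffles over the infinite alphabets $\mathcal{A}_\infty=\{a_1,a_2,\dots\}$ and $\mathcal{X}_\infty=\{x_1,x_2,\dots\}$: its elements are finite words (possibly empty) with distinct letters from $\mathcal{A}_\infty\cup\mathcal{X}_\infty$ in which the letters of each alphabet occur in increasing order of subscripts, ordered by the reflexive-transitive closure of: $w\lessdot w'$ iff $w'$ is obtained from $w$ by deleting a letter of $\mathcal{A}_\infty$ or inserting a letter of $\mathcal{X}_\infty$. For finite $i,j$, $W_{ij}$ is the analogous poset over $\{a_1,\dots,a_i\}$ and $\{x_1,\dots,x_j\}$. Canonical isomorphism type of an interval $[u,v]$: write $u=u_1\cdots u_r$, $v=v_1\cdots v_s$, let $u_{i_1}\cdots u_{i_t}$ and $v_{j_1}\cdots v_{j_t}$ (increasing indices) be the subwords formed by the letters common to $u$ and $v$;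 with $i_0=j_0=0$, $i_{t+1}=r+1$, $j_{t+1}=s+1$, the canonical type is $\prod_{p=1}^{t+1}W_{i_p-i_{p-1}-1,\,j_p-j_{p-1}-1}=\prod_{i,j}W_{ij}^{c_{ij}}$. A multiplicative function is a function $f$ on intervals of $W_{\infty\infty}$ with values $f_{ij}$ ($i,j\ge0$), $f_{00}=1$, such that $f(u,v)=\prod_{i,j}f_{ij}^{c_{ij}}$ whenever $[u,v]$ has canonical type $\prod W_{ij}^{c_{ij}}$. The convolution is $(f*g)(u,v)=\sum_{u\le w\le v}f(u,w)g(w,v)$, and $(f*g)_{ij}$ denotes its value on an interval of canonical type $W_{ij}$, e.g. $[a_1\cdots a_i,\ x_1\cdots x_j]$. *)

(* Defs.v *)
From HB Require Import structures.
From mathcomp Require Import all_boot all_algebra.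
From mathcomp Require Import boolp classical_sets functions cardinality fsbigop.
From Stdlib Require Import Relation_Operators.

Set Implicit Arguments.
Unset Strict Implicit.
Unset Printing Implicit Defensive.

Import GRing.Theory.
Local Open Scope ring_scope.
Local Open Scope classical_set_scope.

(* A letter: [inl k] is a_{k+1} (alphabet A_oo), [inr k] is x_{k+1} (X_oo). *)
Definition letter := (nat + nat)%type.
Definition word := seq letter.

Definition a_idx (w : word) : seq nat :=
  pmap (fun l : letter => if l is inl k then Some k else None) w.
Definition x_idx (w : word) : seq nat :=
  pmap (fun l : letter => if l is inr k then Some k else None) w.

Definition is_word (w : word) : bool :=
  sorted ltn (a_idx w) && sorted ltn (x_idx w).

Definition covers (w w' : word) : Prop :=
  [/\ is_word w, is_word w' &
   (exists (s1 s2 : word) (k : nat), w = s1 ++ inl k :: s2 /\ w' = s1 ++ s2) \/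
   (exists (s1 s2 : word) (k : nat), w = s1 ++ s2 /\ w' = s1 ++ inr k :: s2)].

Definition wle (u v : word) : Prop :=
  [/\ is_word u, is_word v & clos_refl_trans word covers u v].

Definition interval (u v : word) : set word := [set w | wle u w /\ wle w v].

(* gaps P w: lengths of the maximal blocks of w between consecutive letters
   satisfying P (including before the first and after the last one);
   if w has t letters satisfying P, this has t+1 entries. *)
Fixpoint gaps (P : pred letter) (w : word) : seq nat :=
  match w with
  | [::] => [:: 0%N]
  | l :: w' => let g := gaps P w' in
               if P l then 0%N :: g else (head 0%N g).+1 :: behead g
  end.

(* Canonical type of [u,v] as the list of pairs (i_p - i_{p-1} - 1,
   j_p - j_{p-1} - 1), p = 1..t+1, i.e. the factors W_{ij} of the product. *)
Definition canon_type (u v : word) : seq (nat * nat) :=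
  zip (gaps (fun l => l \in v) u) (gaps (fun l => l \in u) v).

(* f is multiplicative with values fc_{ij}: f(u,v) = prod_p fc_{i_p j_p}
   on every interval [u,v]. (The condition fc_{00} = 1 is stated separately.) *)
Definition is_multiplicative (R : comUnitRingType) (fc : nat -> nat -> R)
    (f : word -> word -> R) : Prop :=
  forall u v, wle u v -> f u v = \prod_(p <- canon_type u v) fc p.1 p.2.

Definition conv (R : comUnitRingType) (f g : word -> word -> R)
    (u v : word) : R :=
  \sum_(w \in interval u v) f u w * g w v.

Definition aword (i : nat) : word := [seq inl k | k <- iota 0 i].
Definition xword (j : nat) : word := [seq inr k | k <- iota 0 j].

Section Series.
Variable R : comUnitRingType.

Definition useries := nat -> R.
Definition umul (a b : useries) : useries :=
  fun n => \sum_(k < n.+1) a k * b (n - k)%N.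
Definition uone : useries := fun n => (n == 0%N)%:R.
Definition upow (h : useries) (j : nat) : useries := iter j (umul h) uone.
Definition ushift (a : useries) : useries :=
  fun n => if n is m.+1 then a m else 0.

(* bivariate series: S i j is the coefficient of x^i y^j *)
Definition series := nat -> nat -> R.
Definition ps_add (A B : series) : series := fun i j => A i j + B i j.
Definition ps_sub (A B : series) : series := fun i j => A i j - B i j.
Definition ps_mul (A B : series) : series :=
  fun i j => \sum_(k < i.+1) \sum_(l < j.+1) A k l * B (i - k)%N (j - l)%N.
Definition ps_one : series := fun i j => ((i == 0%N) && (j == 0%N))%:R.
Definition ps_zero : series := fun _ _ => 0.

(* 1/A : the multiplicative inverse of A (if it exists; 0 otherwise). *)
Definition ps_inv (A : series) : series :=
  match pselect (exists B : series, ps_mul A B = ps_one) with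
  | left h => projT1 (cid h)
  | right _ => ps_zero
  end.

Definition lift_x (a : useries) : series :=
  fun i j => if j == 0%N then a i else 0.
Definition lift_y (a : useries) : series :=
  fun i j => if i == 0%N then a j else 0.

(* F(x, h(y)) and G(h(x), y), for h with zero constant term (so only
   j <= n contributes to the coefficient of y^n). *)
Definition subst_y (F : series) (h : useries) : series :=
  fun i n => \sum_(j < n.+1) F i j * upow h j n.
Definition subst_x (G : series) (h : useries) : series :=
  fun n j => \sum_(i < n.+1) G i j * upow h i n.

End Series.

(* Main.v *)
Require Import Defs.
From HB Require Import structures.
From mathcomp Require Import all_boot all_algebra.
From mathcomp Require Import boolp classical_sets functions cardinality fsbigop.
From mathcomp Require Import ring zify.

Set Implicit Arguments.
Unset Strict Implicit.
Unset Printing Implicit Defensive.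
Import GRing.Theory.
Local Open Scope ring_scope.

Section Ser.
Variable R : comUnitRingType.

Definition ser : Type := series R.
HB.instance Definition _ := gen_eqMixin ser.
HB.instance Definition _ := gen_choiceMixin ser.

Definition pe (N : nat) (A : series R) : {poly {poly R}} :=
  \poly_(i < N) \poly_(j < N) A i j.

Lemma pe_coef N A i j : (i < N)%N -> (j < N)%N -> ((pe N A)`_i)`_j = A i j.
Proof. by move=> hi hj; rewrite /pe coef_poly hi coef_poly hj. Qed.

Lemma mul_rep (P Q : {poly {poly R}}) (A B : series R) i j :
  (forall k l, (k <= i)%N -> (l <= j)%N -> P`_k`_l = A k l) ->
  (forall k l, (k <= i)%N -> (l <= j)%N -> Q`_k`_l = B k l) ->
  ((P * Q)`_i)`_j = ps_mul A B i j.
Proof.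
move=> hP hQ; rewrite coefM coef_sum /ps_mul.
apply: eq_bigr => k _; rewrite coefM.
apply: eq_bigr => l _.
rewrite hP ?hQ ?leq_subr //; by rewrite -ltnS.
Qed.

Lemma pe_rep A N i j : (i < N)%N -> (j < N)%N ->
  forall k l, (k <= i)%N -> (l <= j)%N -> (pe N A)`_k`_l = A k l.
Proof.
move=> hi hj k l hk hl; rewrite pe_coef //.
  exact: leq_ltn_trans hk hi.
exact: leq_ltn_trans hl hj.
Qed.

Lemma ps_mulC (A B : series R) : ps_mul A B = ps_mul B A.
Proof.
apply/funext => i; apply/funext => j.
set N := (maxn i j).+1.
have hi : (i < N)%N by rewrite ltnS leq_maxl.
have hj : (j < N)%N by rewrite ltnS leq_maxr.
rewrite -(mul_rep (pe_rep A hi hj) (pe_rep B hi hj)).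
by rewrite mulrC (mul_rep (pe_rep B hi hj) (pe_rep A hi hj)).
Qed.

Lemma ps_mulA (A B C : series R) : ps_mul A (ps_mul B C) = ps_mul (ps_mul A B) C.
Proof.
apply/funext => i; apply/funext => j.
set N := (maxn i j).+1.
have hi : (i < N)%N by rewrite ltnS leq_maxl.
have hj : (j < N)%N by rewrite ltnS leq_maxr.
have hBC : forall k l, (k <= i)%N -> (l <= j)%N ->
   (pe N B * pe N C)`_k`_l = ps_mul B C k l.
  move=> k l hk hl; apply: mul_rep; apply: pe_rep.
  - exact: leq_ltn_trans hk hi.
  - exact: leq_ltn_trans hl hj.
  - exact: leq_ltn_trans hk hi.
  - exact: leq_ltn_trans hl hj.
have hAB : forall k l, (k <= i)%N -> (l <= j)%N ->
   (pe N A * pe N B)`_k`_l = ps_mul A B k l.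
  move=> k l hk hl; apply: mul_rep; apply: pe_rep.
  - exact: leq_ltn_trans hk hi.
  - exact: leq_ltn_trans hl hj.
  - exact: leq_ltn_trans hk hi.
  - exact: leq_ltn_trans hl hj.
rewrite -(mul_rep (pe_rep A hi hj) hBC) -(mul_rep hAB (pe_rep C hi hj)).
by rewrite mulrA.
Qed.

Lemma ps_mul1 (A : series R) : ps_mul (ps_one R) A = A.
Proof.
apply/funext => i; apply/funext => j.
set N := (maxn i j).+1.
have hi : (i < N)%N by rewrite ltnS leq_maxl.
have hj : (j < N)%N by rewrite ltnS leq_maxr.
have h1 : forall k l, (k <= i)%N -> (l <= j)%N -> (1 : {poly {poly R}})`_k`_l = ps_one R k l.
  move=> k l _ _; rewrite /ps_one coef1; case: (k == 0%N) => /=.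
    by rewrite coef1.
  by rewrite coef0.
by rewrite -(mul_rep h1 (pe_rep A hi hj)) mul1r pe_coef.
Qed.

Lemma ps_mulDl (A B C : series R) :
  ps_mul (ps_add A B) C = ps_add (ps_mul A C) (ps_mul B C).
Proof.
apply/funext => i; apply/funext => j; rewrite /ps_mul /ps_add -big_split /=.
apply: eq_bigr => k _; rewrite -big_split /=; apply: eq_bigr => l _.
by rewrite mulrDl.
Qed.

Lemma ps_addA : associative (@ps_add R).
Proof. by move=> A B C; apply/funext => i; apply/funext => j; rewrite /ps_add addrA. Qed.
Lemma ps_addC : commutative (@ps_add R).
Proof. by move=> A B; apply/funext => i; apply/funext => j; rewrite /ps_add addrC. Qed.
Lemma ps_add0 : left_id (ps_zero R) (@ps_add R).
Proof. by move=> A; apply/funext => i; apply/funext => j; rewrite /ps_add /ps_zero add0r. Qed.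
Definition ps_opp (A : series R) : series R := fun i j => - A i j.
Lemma ps_addN : left_inverse (ps_zero R) ps_opp (@ps_add R).
Proof. by move=> A; apply/funext => i; apply/funext => j; rewrite /ps_add /ps_opp addNr. Qed.

HB.instance Definition _ := GRing.isZmodule.Build ser ps_addA ps_addC ps_add0 ps_addN.

Lemma ps_one_neq0 : (ps_one R : ser) != 0.
Proof.
apply/eqP => /(congr1 (fun A : ser => A 0%N 0%N)); rewrite /ps_one /=.
by move/eqP; rewrite oner_eq0.
Qed.

HB.instance Definition _ := GRing.Zmodule_isComNzRing.Build ser
  (ps_mulA : associative (@ps_mul R : ser -> ser -> ser)) ps_mulC ps_mul1 ps_mulDl ps_one_neq0.

Lemma serE_mul (A B : ser) : A * B = ps_mul A B. Proof. by []. Qed.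
Lemma serE_add (A B : ser) : A + B = ps_add A B. Proof. by []. Qed.
Lemma serE_sub (A B : ser) : A - B = ps_sub A B. Proof. by []. Qed.
Lemma serE_one : (1 : ser) = ps_one R. Proof. by []. Qed.





Definition lx (a : useries R) : ser := lift_x a.
Definition ly (a : useries R) : ser := lift_y a.

Lemma sum_ext0 (G : nat -> R) n N : (n <= N)%N ->
  (forall k, (n <= k)%N -> (k < N)%N -> G k = 0) ->
  \sum_(k < n) G k = \sum_(k < N) G k.
Proof.
move=> hnN hG; rewrite -!(big_mkord xpredT) (@big_cat_nat _ _ _ n 0 N) /= ?leq0n //.
rewrite [X in _ = _ + X]big_nat_cond [X in _ = _ + X]big1 ?addr0 //.
by move=> k /andP[/andP[h1 h2] _]; apply: hG.
Qed.

Lemma ser_coef_sum (I : Type) (r : seq I) (F : I -> ser) i j :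
  (\sum_(k <- r) F k) i j = \sum_(k <- r) F k i j.
Proof.
elim: r => [|a r IH]; first by rewrite !big_nil.
by rewrite !big_cons -IH.
Qed.

Lemma ser_coef_add (A B : ser) i j : (A + B) i j = A i j + B i j. Proof. by []. Qed.
Lemma ser_coef_sub (A B : ser) i j : (A - B) i j = A i j - B i j. Proof. by []. Qed.
Lemma ser_coef_one i j : (1 : ser) i j = ((i == 0%N) && (j == 0%N))%:R. Proof. by []. Qed.
Lemma ser_coef_zero i j : (0 : ser) i j = 0. Proof. by []. Qed.

Lemma ser_ext (A B : ser) : (forall i j, A i j = B i j) -> A = B.
Proof. by move=> h; apply/funext => i; apply/funext => j. Qed.

Lemma coef_lxM (a : useries R) (B : ser) n m :
  (lx a * B) n m = \sum_(k < n.+1) a k * B (n - k)%N m.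
Proof.
rewrite [LHS]/GRing.mul /= /ps_mul; apply: eq_bigr => k _.
rewrite big_ord_recl /= /lx /lift_x /= subn0 big1 ?addr0 // => l _.
by rewrite mul0r.
Qed.

Lemma coef_lyM (a : useries R) (B : ser) n m :
  (ly a * B) n m = \sum_(l < m.+1) a l * B n (m - l)%N.
Proof.
rewrite [LHS]/GRing.mul /= /ps_mul big_ord_recl /= /ly /lift_y /= subn0.
rewrite [X in _ + X]big1 ?addr0 //.
by move=> k _; apply: big1 => l _; rewrite mul0r.
Qed.

Lemma coef_lxly (a b : useries R) n m :
  (lx a * ly b) n m = a n * b m.
Proof.
rewrite coef_lxM big_ord_recr /= subnn /ly /lift_y /= big1 ?add0r //.
move=> k _; have : (n - k)%N != 0%N by rewrite subn_eq0 -ltnNge ltn_ord.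
by move/negbTE => ->; rewrite mulr0.
Qed.

Definition Xs : ser := lx (ushift (uone R)).
Definition Ys : ser := ly (ushift (uone R)).

Lemma ushift_umul (a : useries R) : umul (ushift (uone R)) a = ushift a.
Proof.
apply/funext => -[|n]; rewrite /umul.
  by rewrite big_ord_recl big_ord0 /= mul0r addr0.
rewrite big_ord_recl /= mul0r add0r big_ord_recl /= /bump /= /uone /= mul1r.
by rewrite big1 ?addr0 ?add1n ?subSS ?subn0 // => k _; rewrite mul0r.
Qed.

Lemma lift_xM (a b : useries R) : lx a * lx b = lx (umul a b).
Proof.
apply: ser_ext => n m; rewrite coef_lxM /lx /lift_x /umul.
case: (m == 0%N) => //; by rewrite big1 // => k _; rewrite mulr0.
Qed.

Lemma lift_yM (a b : useries R) : ly a * ly b = ly (umul a b).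
Proof.
apply: ser_ext => n m; rewrite coef_lyM /ly /lift_y /umul.
case: (n == 0%N) => //; by rewrite big1 // => k _; rewrite mulr0.
Qed.

Lemma lift_x_shift (a : useries R) : lx (ushift a) = Xs * lx a.
Proof. by rewrite /Xs lift_xM ushift_umul. Qed.
Lemma lift_y_shift (a : useries R) : ly (ushift a) = Ys * ly a.
Proof. by rewrite /Ys lift_yM ushift_umul. Qed.

Lemma contr_y (h : useries R) (D : nat -> ser) :
  (forall b, D b = ly (ushift h) * D b.+1) -> forall b, D b = 0.
Proof.
move=> hD.
suff H : forall m b n, D b n m = 0 by move=> b; apply: ser_ext => n m; rewrite H.
elim/ltn_ind => m IH b n.
rewrite hD coef_lyM big_ord_recl /= mul0r add0r big1 // => l _.
by rewrite IH ?mulr0 // /bump /=; case: l => l /= hl; lia.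
Qed.

Lemma contr_x (h : useries R) (D : nat -> ser) :
  (forall b, D b = lx (ushift h) * D b.+1) -> forall b, D b = 0.
Proof.
move=> hD.
suff H : forall n b m, D b n m = 0 by move=> b; apply: ser_ext => n m; rewrite H.
elim/ltn_ind => n IH b m.
rewrite hD coef_lxM big_ord_recl /= mul0r add0r big1 // => l _.
by rewrite IH ?mulr0 // /bump /=; case: l => l /= hl; lia.
Qed.

Lemma upow_low (h : useries R) k n : h 0%N = 0 -> (n < k)%N -> upow h k n = 0.
Proof.
move=> h0; elim: k n => [|k IH] n //= hn.
rewrite /umul big_ord_recl /= h0 mul0r add0r.
by rewrite big1 // => l _; rewrite IH ?mulr0 // /bump /=; case: l => l /= hl; lia.
Qed.

Lemma upowS (h : useries R) k : upow h k.+1 = umul h (upow h k).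
Proof. by rewrite /upow iterS. Qed.

Definition SS (F : series R) (h : useries R) (b : nat) : ser :=
  fun n m => \sum_(k < m.+1) F n (b + k)%N * upow h k m.
Definition TT (G : series R) (h : useries R) (c : nat) : ser :=
  fun n m => \sum_(k < n.+1) G (c + k)%N m * upow h k n.

Lemma SS_rec F h b : h 0%N = 0 ->
  SS F h b = lx (fun n => F n b) + ly h * SS F h b.+1.
Proof.
move=> h0; apply: ser_ext => n m.
rewrite ser_coef_add coef_lyM /SS big_ord_recl /= addn0.
congr (_ + _).
  by rewrite /lx /lift_x /upow /= /uone; case: (m == 0%N); rewrite ?mulr1 ?mulr0.
have E1 : forall k : 'I_m, F n (b + bump 0 k) * upow h (bump 0 k) m =
   \sum_(l < m.+1) h l * (F n (b.+1 + k)%N * upow h k (m - l)%N).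
  move=> k; rewrite /bump /= add1n add0n /umul mulr_sumr; apply: eq_bigr => l _.
  by rewrite mulrCA; congr (_ * (_ * _)); rewrite addSnnS.
rewrite (eq_bigr _ (fun k _ => E1 k)) exchange_big /=; apply: eq_bigr => l _.
rewrite mulr_sumr; case: l => l /=; rewrite ltnS => hl.
case: l hl => [|l] hl.
  by rewrite h0 !big1 // => k _; rewrite mul0r.
symmetry; apply: (@sum_ext0 (fun k => h l.+1 * (F n (b.+1 + k)%N * upow h k (m - l.+1)%N))) => [|k hk1 hk2]; first by lia.
by rewrite upow_low ?mulr0 //; lia.
Qed.

Lemma TT_rec G h c : h 0%N = 0 ->
  TT G h c = ly (fun m => G c m) + lx h * TT G h c.+1.
Proof.
move=> h0; apply: ser_ext => n m.
rewrite ser_coef_add coef_lxM /TT big_ord_recl /= addn0.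
congr (_ + _).
  by rewrite /ly /lift_y /upow /= /uone; case: (n == 0%N); rewrite ?mulr1 ?mulr0.
have E1 : forall k : 'I_n, G (c + bump 0 k)%N m * upow h (bump 0 k) n =
   \sum_(l < n.+1) h l * (G (c.+1 + k)%N m * upow h k (n - l)%N).
  move=> k; rewrite /bump /= add1n add0n /umul mulr_sumr; apply: eq_bigr => l _.
  by rewrite mulrCA; congr (_ * (_ * _)); rewrite addSnnS.
rewrite (eq_bigr _ (fun k _ => E1 k)) exchange_big /=; apply: eq_bigr => l _.
rewrite mulr_sumr; case: l => l /=; rewrite ltnS => hl.
case: l hl => [|l] hl.
  by rewrite h0 !big1 // => k _; rewrite mul0r.
symmetry; apply: (@sum_ext0 (fun k => h l.+1 * (G (c.+1 + k)%N m * upow h k (n - l.+1)%N))) => [|k hk1 hk2]; first by lia.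
by rewrite upow_low ?mulr0 //; lia.
Qed.


Lemma ps_mul_ext (A B B' : ser) i j :
  (forall k l, (k <= i)%N -> (l <= j)%N -> B k l = B' k l) ->
  (A * B) i j = (A * B') i j.
Proof.
move=> h; rewrite /GRing.mul /= /ps_mul; apply: eq_bigr => k _; apply: eq_bigr => l _.
by rewrite h // leq_subr.
Qed.

Definition low d (A : ser) := forall i j, (i + j < d)%N -> A i j = 0.

Lemma low_mul d e (A B : ser) : low d A -> low e B -> low (d + e) (A * B).
Proof.
move=> hA hB i j hij; rewrite /GRing.mul /= /ps_mul; apply: big1 => k _; apply: big1 => l _.
case: k l => k hk [l hl] /=.
have [hkl|hkl] := ltnP (k + l) d; first by rewrite hA // mul0r.
by rewrite hB ?mulr0 //; lia.
Qed.

Lemma low_exp (N : ser) k : low 1 N -> low k (N ^+ k).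
Proof.
move=> hN; elim: k => [|k IH]; first by move=> i j.
by rewrite exprS; apply: (low_mul hN IH).
Qed.

Lemma geom_sum (T : comRingType) (x : T) n :
  (1 - x) * \sum_(k < n) x ^+ k = 1 - x ^+ n.
Proof.
elim: n => [|n IH]; first by rewrite big_ord0 mulr0 expr0 subrr.
by rewrite big_ord_recr /= mulrDr IH exprS; ring.
Qed.

Lemma ser_inv_ex (A : ser) : A 0%N 0%N = 1 -> exists B : ser, A * B = 1.
Proof.
move=> hA.
set N := 1 - A.
have hN : low 1 N.
  move=> i j hij; have -> : i = 0%N by lia.
  have -> : j = 0%N by lia.
  by rewrite /N ser_coef_sub ser_coef_one hA subrr.
pose B : ser := fun i j => (\sum_(k < (i + j).+1) N ^+ k) i j.
exists B; apply: ser_ext => i j.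
rewrite (@ps_mul_ext A B (\sum_(k < (i + j).+1) N ^+ k) i j).
  have -> : A = 1 - N by rewrite /N opprB addrC subrK.
  rewrite geom_sum ser_coef_sub (@low_exp N (i + j).+1 hN i j) ?subr0 //.
move=> k l hk hl; rewrite /B !ser_coef_sum.
apply: (@sum_ext0 (fun k' => (N ^+ k') k l)) => [|k' hk1 hk2]; first by lia.
by rewrite (@low_exp N k' hN) //; lia.
Qed.

Lemma ps_invP (A : ser) : (exists B : ser, A * B = 1) -> A * ps_inv A = 1.
Proof.
rewrite /ps_inv; case: pselect => [h _|h hB]; last by exfalso; apply: h.
exact: (projT2 (cid h)).
Qed.

Lemma ps_inv_uniq (A B : ser) : A * B = 1 -> ps_inv A = B.
Proof.
move=> hB; have hI := ps_invP (ex_intro _ B hB).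
have -> : (ps_inv A : ser) = (ps_inv A : ser) * (A * B) by rewrite hB mulr1.
by rewrite mulrA (mulrC _ A) hI mul1r.
Qed.

End Ser.

Lemma key_identity (T : comRingType) (FG a b X Y S1 T1 F0 G0 Ft Gt : T) :
  FG = a * Ft -> a = G0 + X * (b * T1) -> b = F0 + Y * (a * S1) ->
  Ft = F0 + Y * G0 * S1 -> Gt = G0 + X * F0 * T1 ->
  FG * (F0 * Gt + G0 * Ft - Ft * Gt) = F0 * G0 * (Ft * Gt).
Proof.
move=> hFG ha hb hFt hGt.
have ha' : a * (1 - X * Y * T1 * S1) = Gt.
  rewrite hGt; transitivity (a - X * T1 * (Y * (a * S1))); first by ring.
  have -> : Y * (a * S1) = b - F0 by rewrite hb; ring.
  rewrite {1}ha; ring.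
rewrite hFG.
transitivity ((a * (1 - X * Y * T1 * S1)) * Ft * F0 * G0).
  rewrite hFt hGt; ring.
by rewrite ha'; ring.
Qed.

Lemma inv_comb (T : comRingType) (FG F0 G0 Ft Gt i1 i2 i3 : T) :
  FG * (F0 * Gt + G0 * Ft - Ft * Gt) = F0 * G0 * (Ft * Gt) ->
  Ft * G0 * i1 = 1 -> F0 * Gt * i2 = 1 -> F0 * G0 * i3 = 1 ->
  FG * (i1 + i2 - i3) = 1.
Proof.
move=> hk h1 h2 h3.
have e3 : Ft * Gt * i1 * i2 = i3.
  rewrite -[RHS]mul1r -h1 -[X in X * _ * i3]mul1r -h2.
  transitivity (Ft * Gt * i1 * i2 * (F0 * G0 * i3)); first by rewrite h3 mulr1.
  ring.
have e : i1 + i2 - i3 = (F0 * Gt + G0 * Ft - Ft * Gt) * i1 * i2.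
  rewrite -e3.
  transitivity ((F0 * Gt * i2) * i1 + (Ft * G0 * i1) * i2 - Ft * Gt * i1 * i2).
    by rewrite h1 h2 !mul1r.
  ring.
rewrite e mulrA mulrA hk.
transitivity ((Ft * G0 * i1) * (F0 * Gt * i2)); first by ring.
by rewrite h1 h2 mulr1.
Qed.

Section CC.
Variable R : comUnitRingType.
Variables fc gc : nat -> nat -> R.

Fixpoint cc (k b g n m : nat) : R :=
  if k is k'.+1 then
    fc n b * gc g m
    + \sum_(p < n) fc p b * cc k' 0 g.+1 (n - p.+1)%N m
    + \sum_(q < m) gc g q * cc k' b.+1 0 n (m - q.+1)%N
  else fc n b * gc g m.

Lemma ccS k b g n m : cc k.+1 b g n m =
    fc n b * gc g m
    + \sum_(p < n) fc p b * cc k 0 g.+1 (n - p.+1)%N m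
    + \sum_(q < m) gc g q * cc k b.+1 0 n (m - q.+1)%N.
Proof. by []. Qed.

Lemma cc_fuel_step k b g n m : (n + m <= k)%N -> cc k.+1 b g n m = cc k b g n m.
Proof.
elim: k b g n m => [|k IH] b g n m h.
  have -> : n = 0%N by lia.
  have -> : m = 0%N by lia.
  by rewrite /= !big_ord0 !addr0.
rewrite ccS [RHS]ccS; congr (_ + _ + _); apply: eq_bigr => -[p hp] _;
  rewrite IH //= ; lia.
Qed.

Lemma cc_fuel k b g n m : (n + m <= k)%N -> cc k b g n m = cc (n + m) b g n m.
Proof.
move=> h; rewrite -(subnK h); elim: (k - (n + m))%N => [|d IH] //.
by rewrite addSn cc_fuel_step ?IH //; lia.
Qed.

Definition Pser b : ser R := fun n m => cc (n + m) b 0 n m.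
Definition Qser g : ser R := fun n m => cc (n + m) 0 g n m.
Definition F0 : useries R := fun n => fc n 0.
Definition G0 : useries R := fun m => gc 0 m.

Lemma P_rec b : Pser b = lx (fun n => fc n b) * ly G0
   + lx (ushift (fun n => fc n b)) * Qser 1 + ly (ushift G0) * Pser b.+1.
Proof.
apply: ser_ext => n m.
rewrite !ser_coef_add coef_lxly coef_lxM coef_lyM /Pser -cc_fuel_step // ccS.
congr (_ + _ + _).
  rewrite big_ord_recl /= mul0r add0r; apply: eq_bigr => -[p hp] _ /=.
  by rewrite /Qser /bump /= add1n cc_fuel //; lia.
rewrite big_ord_recl /= mul0r add0r; apply: eq_bigr => -[p hp] _ /=.
by rewrite /G0 /bump /= add1n cc_fuel //; lia.
Qed.

Lemma Q_rec g : Qser g = lx F0 * ly (fun m => gc g m)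
   + ly (ushift (fun m => gc g m)) * Pser 1 + lx (ushift F0) * Qser g.+1.
Proof.
apply: ser_ext => n m.
rewrite !ser_coef_add coef_lxly coef_lxM coef_lyM /Qser -cc_fuel_step // ccS.
rewrite -[RHS]addrA [X in _ = _ + X]addrC [RHS]addrA.
congr (_ + _ + _).
  rewrite big_ord_recl /= mul0r add0r; apply: eq_bigr => -[p hp] _ /=.
  by rewrite /F0 /bump /= add1n cc_fuel //; lia.
rewrite big_ord_recl /= mul0r add0r; apply: eq_bigr => -[p hp] _ /=.
by rewrite /Pser /bump /= add1n cc_fuel //; lia.
Qed.

Definition aa : ser R := ly G0 + Xs R * Qser 1.
Definition bb : ser R := lx F0 + Ys R * Pser 1.

Lemma P_sol b : Pser b = aa * SS fc (ushift G0) b.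
Proof.
pose D b := Pser b - aa * SS fc (ushift G0) b.
suff : D b = 0 by move/eqP; rewrite subr_eq0 => /eqP.
apply: (@contr_y _ G0 D) => c.
rewrite /D P_rec (@SS_rec _ fc (ushift G0) c) // lift_x_shift /aa; ring.
Qed.

Lemma Q_sol g : Qser g = bb * TT gc (ushift F0) g.
Proof.
pose D g := Qser g - bb * TT gc (ushift F0) g.
suff : D g = 0 by move/eqP; rewrite subr_eq0 => /eqP.
apply: (@contr_x _ F0 D) => c.
rewrite /D Q_rec (@TT_rec _ gc (ushift F0) c) // lift_y_shift /bb; ring.
Qed.

Lemma cc_key :
  Pser 0 * (lx F0 * TT gc (ushift F0) 0 + ly G0 * SS fc (ushift G0) 0
            - SS fc (ushift G0) 0 * TT gc (ushift F0) 0)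
  = lx F0 * ly G0 * (SS fc (ushift G0) 0 * TT gc (ushift F0) 0).
Proof.
apply: (@key_identity _ _ aa bb (Xs R) (Ys R) (SS fc (ushift G0) 1) (TT gc (ushift F0) 1)).
- exact: P_sol.
- by rewrite /aa Q_sol.
- by rewrite /bb P_sol.
- by rewrite SS_rec // lift_y_shift.
- by rewrite TT_rec // lift_x_shift.
Qed.

End CC.

From Stdlib Require Import Relation_Operators.

Definition isA (l : letter) : bool := if l is inl _ then true else false.
Definition wa (s : seq nat) : word := [seq (inl k : letter) | k <- s].
Definition wx (s : seq nat) : word := [seq (inr k : letter) | k <- s].

Lemma a_idx_inl k (w : word) : a_idx (inl k :: w) = k :: a_idx w. Proof. by []. Qed.
Lemma a_idx_inr k (w : word) : a_idx (inr k :: w) = a_idx w. Proof. by []. Qed.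
Lemma x_idx_inl k (w : word) : x_idx (inl k :: w) = x_idx w. Proof. by []. Qed.
Lemma x_idx_inr k (w : word) : x_idx (inr k :: w) = k :: x_idx w. Proof. by []. Qed.
Lemma a_idx_cat (s t : word) : a_idx (s ++ t) = a_idx s ++ a_idx t.
Proof. exact: pmap_cat. Qed.
Lemma x_idx_cat (s t : word) : x_idx (s ++ t) = x_idx s ++ x_idx t.
Proof. exact: pmap_cat. Qed.
Lemma a_idx_wa s : a_idx (wa s) = s. Proof. by elim: s => //= k s ->. Qed.
Lemma x_idx_wa s : x_idx (wa s) = [::]. Proof. by elim: s. Qed.
Lemma a_idx_wx s : a_idx (wx s) = [::]. Proof. by elim: s. Qed.
Lemma x_idx_wx s : x_idx (wx s) = s. Proof. by elim: s => //= k s ->. Qed.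

Lemma mem_inl b (w : word) : ((inl b : letter) \in w) = (b \in a_idx w).
Proof.
by elim: w => [|[k|k] w IH] //=; rewrite in_cons IH.
Qed.

Lemma mem_inr b (w : word) : ((inr b : letter) \in w) = (b \in x_idx w).
Proof.
by elim: w => [|[k|k] w IH] //=; rewrite in_cons IH.
Qed.

Lemma subseq_a_idx (w1 w2 : word) : subseq w1 w2 -> subseq (a_idx w1) (a_idx w2).
Proof.
case/subseqP => m _ ->; elim: w2 m => [|l w2 IH] [|b m] //=.
  by rewrite sub0seq.
case: b; case: l => k /=; rewrite ?eqxx ?IH //.
exact: (subseq_trans (IH m) (subseq_cons _ _)).
Qed.

Lemma subseq_x_idx (w1 w2 : word) : subseq w1 w2 -> subseq (x_idx w1) (x_idx w2).
Proof.
case/subseqP => m _ ->; elim: w2 m => [|l w2 IH] [|b m] //=.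
  by rewrite sub0seq.
case: b; case: l => k /=; rewrite ?eqxx ?IH //.
exact: (subseq_trans (IH m) (subseq_cons _ _)).
Qed.

Lemma is_word_sub (w1 w2 : word) : subseq w1 w2 -> is_word w2 -> is_word w1.
Proof.
move=> hs /andP[ha hx]; apply/andP; split.
  exact: (subseq_sorted ltn_trans (subseq_a_idx hs) ha).
exact: (subseq_sorted ltn_trans (subseq_x_idx hs) hx).
Qed.

Lemma covers_inv w w' : covers w w' ->
  subseq (a_idx w') (a_idx w) /\ subseq (x_idx w) (x_idx w').
Proof.
case=> _ _ [[s1 [s2 [k [-> ->]]]]|[s1 [s2 [k [-> ->]]]]];
  rewrite !a_idx_cat !x_idx_cat ?a_idx_inl ?x_idx_inl ?a_idx_inr ?x_idx_inr;
  split; apply: cat_subseq => //; exact: subseq_cons.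
Qed.

Lemma wle_inv u w : clos_refl_trans word covers u w ->
  subseq (a_idx w) (a_idx u) /\ subseq (x_idx u) (x_idx w).
Proof.
elim=> [x y /covers_inv //|x|x y z _ [h1 h2] _ [h3 h4]]; first by split.
by split; [exact: subseq_trans h3 h1|exact: subseq_trans h2 h4].
Qed.

Lemma del_path (s pre : word) (m : seq bool) :
  size m = size s -> all (fun p => p.1 || isA p.2) (zip m s) ->
  is_word (pre ++ s) -> clos_refl_trans word covers (pre ++ s) (pre ++ mask m s).
Proof.
elim: s pre m => [|l s IH] pre [|b m] //=.
  by move=> _ _ _; rewrite cats0; apply: rt_refl.
move=> [hm] /andP[hb hall] hw.
case: b hb => /= hb.
  by rewrite -!cat_rcons; apply: IH; rewrite ?cat_rcons.
case: l hb hw => // k _ hw.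
have hw' : is_word (pre ++ s).
  by apply: (is_word_sub _ hw); apply: cat_subseq => //; exact: subseq_cons.
apply: (rt_trans _ _ _ (pre ++ s)); last exact: IH.
apply: rt_step; split => //; left; by exists pre, s, k.
Qed.

Lemma ins_path (s pre : word) (m : seq bool) :
  size m = size s -> all (fun p => p.1 || ~~ isA p.2) (zip m s) ->
  is_word (pre ++ s) -> clos_refl_trans word covers (pre ++ mask m s) (pre ++ s).
Proof.
elim: s pre m => [|l s IH] pre [|b m] //=.
  by move=> _ _ _; rewrite cats0; apply: rt_refl.
move=> [hm] /andP[hb hall] hw.
case: b hb => /= hb.
  by rewrite -!cat_rcons; apply: IH; rewrite ?cat_rcons.
case: l hb hw => // k _ hw.
have hw' : is_word (pre ++ s).
  by apply: (is_word_sub _ hw); apply: cat_subseq => //; exact: subseq_cons.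
apply: (rt_trans _ _ _ (pre ++ s)); first exact: IH.
apply: rt_step; split => //; right; by exists pre, s, k.
Qed.

Lemma mask_isA (w : word) : mask (map isA w) w = wa (a_idx w).
Proof. by elim: w => [|[k|k] w IH] //=; rewrite IH. Qed.
Lemma mask_isX (w : word) : mask (map (fun l => ~~ isA l) w) w = wx (x_idx w).
Proof. by elim: w => [|[k|k] w IH] //=; rewrite IH. Qed.
Lemma all_isA (w : word) : all (fun p => p.1 || ~~ isA p.2) (zip (map isA w) w).
Proof. by elim: w => [|[k|k] w IH] //=. Qed.
Lemma all_isX (w : word) : all (fun p => p.1 || isA p.2) (zip (map (fun l => ~~ isA l) w) w).
Proof. by elim: w => [|[k|k] w IH] //=. Qed.
Lemma all_wa (m : seq bool) s : all (fun p => p.1 || isA p.2) (zip m (wa s)).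
Proof. by elim: s m => [|k s IH] [|b m] //=; rewrite IH orbT. Qed.
Lemma all_wx (m : seq bool) s : all (fun p => p.1 || ~~ isA p.2) (zip m (wx s)).
Proof. by elim: s m => [|k s IH] [|b m] //=; rewrite IH orbT. Qed.

Lemma is_word_wa s : sorted ltn s -> is_word (wa s).
Proof. by move=> hs; rewrite /is_word a_idx_wa x_idx_wa hs. Qed.
Lemma is_word_wx s : sorted ltn s -> is_word (wx s).
Proof. by move=> hs; rewrite /is_word a_idx_wx x_idx_wx hs. Qed.

Lemma interval_char i j w :
  Defs.interval (aword i) (xword j) w <->
  (subseq (a_idx w) (iota 0 i) && subseq (x_idx w) (iota 0 j)).
Proof.
have ea : aword i = wa (iota 0 i) by [].
have ex : xword j = wx (iota 0 j) by [].
rewrite ea ex; split.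
  case=> [[_ _ h1] [_ _ h2]].
  have [hA _] := wle_inv h1; have [_ hX] := wle_inv h2.
  by rewrite a_idx_wa in hA; rewrite x_idx_wx in hX; rewrite hA hX.
case/andP=> hA hX.
have hw : is_word w.
  apply/andP; split.
    exact: (subseq_sorted ltn_trans hA (iota_ltn_sorted 0 i)).
  exact: (subseq_sorted ltn_trans hX (iota_ltn_sorted 0 j)).
have hwa := is_word_wa (iota_ltn_sorted 0 i).
have hwx := is_word_wx (iota_ltn_sorted 0 j).
split; split => //.
  apply: (rt_trans _ _ _ (wa (a_idx w))).
    have : subseq (wa (a_idx w)) (wa (iota 0 i)) by apply: map_subseq.
    case/subseqP => m hm ->.
    by apply: (del_path (pre:=[::])) => //; apply: all_wa.
  rewrite -mask_isA; apply: (ins_path (pre:=[::])); rewrite ?size_map //; exact: all_isA.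
apply: (rt_trans _ _ _ (wx (x_idx w))).
  rewrite -mask_isX; apply: (del_path (pre:=[::])); rewrite ?size_map //; exact: all_isX.
have : subseq (wx (x_idx w)) (wx (iota 0 j)) by apply: map_subseq.
case/subseqP => m hm ->.
by apply: (ins_path (pre:=[::])) => //; apply: all_wx.
Qed.

Fixpoint Lw (k : nat) (sa sx : seq nat) : seq word :=
  if k is k'.+1 then
    [::] :: ([seq (inl (nth 0%N sa p) : letter) :: w | p <- iota 0 (size sa),
               w <- Lw k' (drop p.+1 sa) sx]
          ++ [seq (inr (nth 0%N sx q) : letter) :: w | q <- iota 0 (size sx),
               w <- Lw k' sa (drop q.+1 sx)])
  else [:: [::]].

Lemma subseq_nth (s t : seq nat) p : (p < size s)%N -> subseq t (drop p.+1 s) ->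
  subseq (nth 0%N s p :: t) s.
Proof.
move=> hp ht; rewrite -[X in subseq _ X](cat_take_drop p) (drop_nth 0%N hp).
rewrite -[nth _ _ _ :: t]cat0s; apply: cat_subseq; first exact: sub0seq.
by rewrite /= eqxx.
Qed.

Lemma subseq_cons_ex (y : nat) t s : subseq (y :: t) s ->
  exists2 p, (p < size s)%N & nth 0%N s p = y /\ subseq t (drop p.+1 s).
Proof.
elim: s => [|z s IH] //=.
case: eqP => [<-|_] h.
  by exists 0%N => //; rewrite drop0.
by case: (IH h) => p hp [h1 h2]; exists p.+1.
Qed.

Lemma Lw_sub k sa sx w : w \in Lw k sa sx ->
  subseq (a_idx w) sa && subseq (x_idx w) sx.
Proof.
elim: k sa sx w => [|k IH] sa sx w /=.
  by rewrite inE => /eqP ->; rewrite !sub0seq.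
rewrite in_cons mem_cat => /orP[/eqP ->|/orP[]]; first by rewrite !sub0seq.
  case/allpairsPdep => p [w' [hp hw' ->]].
  move: hp; rewrite mem_iota add0n => /andP[_ hp].
  case/andP: (IH _ _ _ hw') => h1 h2.
  by rewrite a_idx_inl x_idx_inl h2 subseq_nth.
case/allpairsPdep => p [w' [hp hw' ->]].
move: hp; rewrite mem_iota add0n => /andP[_ hp].
case/andP: (IH _ _ _ hw') => h1 h2.
by rewrite a_idx_inr x_idx_inr h1 subseq_nth.
Qed.

Lemma idx_nil (w : word) : a_idx w = [::] -> x_idx w = [::] -> w = [::].
Proof. by case: w => [|[k|k] w]. Qed.

Lemma Lw_complete k sa sx w : (size sa + size sx <= k)%N ->
  subseq (a_idx w) sa -> subseq (x_idx w) sx -> w \in Lw k sa sx.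
Proof.
elim: k sa sx w => [|k IH] sa sx w hk hA hX.
  case: sa hk hA => // ; case: sx hX => // hX _ hA.
  rewrite subseq0 in hA; rewrite subseq0 in hX.
  by rewrite (idx_nil (eqP hA) (eqP hX)) inE.
rewrite /= in_cons mem_cat.
case: w hA hX => [|[a|x] w'] hA hX; first by rewrite eqxx.
  rewrite a_idx_inl in hA; rewrite x_idx_inl in hX.
  case: (subseq_cons_ex hA) => p hp [hnth hsub].
  apply/orP; right; apply/orP; left; apply/allpairsPdep.
  exists p, w'; split; last by rewrite hnth.
    by rewrite mem_iota add0n hp.
  apply: IH => //; rewrite size_drop; lia.
rewrite a_idx_inr in hA; rewrite x_idx_inr in hX.
case: (subseq_cons_ex hX) => p hp [hnth hsub].
apply/orP; right; apply/orP; right; apply/allpairsPdep.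
exists p, w'; split; last by rewrite hnth.
  by rewrite mem_iota add0n hp.
apply: IH => //; rewrite size_drop; lia.
Qed.

Lemma Lw_uniq k sa sx : uniq sa -> uniq sx -> uniq (Lw k sa sx).
Proof.
elim: k sa sx => [|k IH] sa sx usa usx //=.
rewrite mem_cat negb_or cat_uniq; apply/andP; split.
  apply/andP; split.
    by apply/negP => /allpairsPdep [p [w' [_ _ //]]].
  by apply/negP => /allpairsPdep [p [w' [_ _ //]]].
apply/andP; split.
  apply: allpairs_uniq_dep; first exact: iota_uniq.
    by move=> p _; apply: IH => //; apply: drop_uniq.
  move=> [p1 w1] [p2 w2] /allpairsPdep [q1 [v1 [hq1 _ [e1 e1']]]]
                         /allpairsPdep [q2 [v2 [hq2 _ [e2 e2']]]] /= [hn hw].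
  subst.
  move: hq1 hq2; rewrite !mem_iota !add0n => /andP[_ hq1] /andP[_ hq2].
  move/eqP: hn; rewrite nth_uniq // => /eqP hq; subst.
  by [].
apply/andP; split.
  apply/hasP => -[w /allpairsPdep [q [v [_ _ ->]]]] /allpairsPdep [p [v' [_ _ //]]].
apply: allpairs_uniq_dep; first exact: iota_uniq.
  by move=> p _; apply: IH => //; apply: drop_uniq.
move=> [p1 w1] [p2 w2] /allpairsPdep [q1 [v1 [hq1 _ [e1 e1']]]]
                       /allpairsPdep [q2 [v2 [hq2 _ [e2 e2']]]] /= [hn hw].
subst.
move: hq1 hq2; rewrite !mem_iota !add0n => /andP[_ hq1] /andP[_ hq2].
move/eqP: hn; rewrite nth_uniq // => /eqP hq; subst.
by [].
Qed.

Definition addhead (b : nat) (s : seq nat) := (head 0%N s + b)%N :: behead s.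

Lemma gaps_allN (P : pred letter) (s : word) : all (predC P) s -> gaps P s = [:: size s].
Proof.
elim: s => [|l s IH] //= /andP[hl hs]; rewrite IH //.
by move: hl; rewrite /= => /negbTE ->.
Qed.

Lemma gaps_first (P : pred letter) (s1 : word) l s2 :
  all (predC P) s1 -> P l -> gaps P (s1 ++ l :: s2) = size s1 :: gaps P s2.
Proof.
elim: s1 => [|l' s1 IH] /= hall hl; first by rewrite hl.
case/andP: hall => hl' hall; rewrite IH //.
by move: hl'; rewrite /= => /negbTE ->.
Qed.

Lemma eq_gaps (P Q : pred letter) (s : word) :
  (forall l, l \in s -> P l = Q l) -> gaps P s = gaps Q s.
Proof.
elim: s => [|l s IH] //= h.
rewrite IH; last by move=> l' hl'; apply: h; rewrite in_cons hl' orbT.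
by rewrite h // in_cons eqxx.
Qed.

Lemma addhead0 (P : pred letter) (s : word) : addhead 0 (gaps P s) = gaps P s.
Proof. by case: s => [|l s] /=; rewrite /addhead /= ?addn0 //; case: (P l). Qed.

Section Weights.
Variable R : comUnitRingType.
Variables fc gc : nat -> nat -> R.

Definition Fw (b : nat) (u w : word) : R :=
  \prod_(p <- zip (gaps (fun l => l \in w) u) (addhead b (gaps (fun l => l \in u) w)))
     fc p.1 p.2.
Definition Gw (g : nat) (w v : word) : R :=
  \prod_(p <- zip (addhead g (gaps (fun l => l \in v) w)) (gaps (fun l => l \in w) v))
     gc p.1 p.2.

Lemma Fw_nil b u : Fw b u [::] = fc (size u) b.
Proof. by rewrite /Fw gaps_allN ?big_seq1 //=; apply/allP. Qed.

Lemma Gw_nil g v : Gw g [::] v = gc g (size v).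
Proof. by rewrite /Gw [X in zip _ X]gaps_allN ?big_seq1 //=; apply/allP. Qed.

Lemma Fw_inr b sa x (w : word) : Fw b (wa sa) ((inr x : letter) :: w) = Fw b.+1 (wa sa) w.
Proof.
rewrite /Fw.
have -> : gaps (fun l => l \in (inr x : letter) :: w) (wa sa) = gaps (fun l => l \in w) (wa sa).
  apply: eq_gaps => l /mapP [k _ ->]; by rewrite in_cons.
have -> : gaps (fun l => l \in wa sa) ((inr x : letter) :: w) =
   (head 0%N (gaps (fun l => l \in wa sa) w)).+1 :: behead (gaps (fun l => l \in wa sa) w).
  by rewrite /= mem_inr x_idx_wa.
by rewrite /addhead /= addSnnS.
Qed.

Lemma Gw_inl g sx a (w : word) : Gw g ((inl a : letter) :: w) (wx sx) = Gw g.+1 w (wx sx).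
Proof.
rewrite /Gw.
have -> : gaps (fun l => l \in (inl a : letter) :: w) (wx sx) = gaps (fun l => l \in w) (wx sx).
  apply: eq_gaps => l /mapP [k _ ->]; by rewrite in_cons.
have -> : gaps (fun l => l \in wx sx) ((inl a : letter) :: w) =
   (head 0%N (gaps (fun l => l \in wx sx) w)).+1 :: behead (gaps (fun l => l \in wx sx) w).
  by rewrite /= mem_inl a_idx_wx.
by rewrite /addhead /= addSnnS.
Qed.

Lemma Fw_inl b sa p (w : word) : uniq sa -> (p < size sa)%N ->
  subseq (a_idx w) (drop p.+1 sa) ->
  Fw b (wa sa) ((inl (nth 0%N sa p) : letter) :: w) = fc p b * Fw 0 (wa (drop p.+1 sa)) w.
Proof.
move=> usa hp hsub.
set a := nth 0%N sa p; set pre := take p sa; set post := drop p.+1 sa.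
have esa : sa = pre ++ a :: post by rewrite /pre /a /post -drop_nth // cat_take_drop.
have hpre : size pre = p by rewrite /pre size_takel // ltnW.
have usa' := usa; rewrite esa cat_uniq /= in usa'.
case/and4P: usa' => _ hnh hapost _.
rewrite negb_or in hnh; case/andP: hnh => hapre /hasPn hpp0.
have hpp : forall c, c \in post -> c \notin pre by move=> c hc; exact: (hpp0 c hc).
have hwpost : forall c, c \in a_idx w -> c \in post by move=> c; apply: mem_subseq.
rewrite /Fw.
have -> : wa sa = wa pre ++ (inl a : letter) :: wa post by rewrite esa /wa map_cat.
rewrite gaps_first; first last.
- by rewrite in_cons eqxx.
- apply/allP => l /mapP [c hc ->] /=; rewrite in_cons mem_inl negb_or; apply/andP; split.
    by apply/eqP => -[e]; rewrite -e hc in hapre.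
  by apply/negP => /hwpost hcp; move: (hpp c hcp); rewrite hc.
rewrite size_map hpre.
have -> : gaps (fun l => l \in (inl a : letter) :: w) (wa post) = gaps (fun l => l \in w) (wa post).
  apply: eq_gaps => l /mapP [c hc ->]; rewrite in_cons.
  have -> : ((inl c : letter) == inl a) = false.
    by apply/eqP => -[e]; rewrite -e hc in hapost.
  by [].
have -> : gaps (fun l => l \in wa pre ++ (inl a : letter) :: wa post) ((inl a : letter) :: w) =
    0%N :: gaps (fun l => l \in wa pre ++ (inl a : letter) :: wa post) w.
  by rewrite /= mem_cat in_cons eqxx orbT.
rewrite /addhead /= add0n big_cons /=; congr (_ * _).
have -> : gaps (fun l => l \in wa pre ++ (inl a : letter) :: wa post) w = gaps (fun l => l \in wa post) w.
  apply: eq_gaps => -[c|c] hl.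
    rewrite !mem_inl !a_idx_cat /= !a_idx_wa.
    have hc : c \in post by apply: hwpost; rewrite -mem_inl.
    by rewrite hc mem_cat in_cons hc !orbT.
  by rewrite !mem_inr !x_idx_cat /= !x_idx_wa.
by rewrite -[X in zip _ X]addhead0.
Qed.

Lemma Gw_inr g sx q (w : word) : uniq sx -> (q < size sx)%N ->
  subseq (x_idx w) (drop q.+1 sx) ->
  Gw g ((inr (nth 0%N sx q) : letter) :: w) (wx sx) = gc g q * Gw 0 w (wx (drop q.+1 sx)).
Proof.
move=> usx hq hsub.
set a := nth 0%N sx q; set pre := take q sx; set post := drop q.+1 sx.
have esx : sx = pre ++ a :: post by rewrite /pre /a /post -drop_nth // cat_take_drop.
have hpre : size pre = q by rewrite /pre size_takel // ltnW.
have usx' := usx; rewrite esx cat_uniq /= in usx'.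
case/and4P: usx' => _ hnh hapost _.
rewrite negb_or in hnh; case/andP: hnh => hapre /hasPn hpp0.
have hpp : forall c, c \in post -> c \notin pre by move=> c hc; exact: (hpp0 c hc).
have hwpost : forall c, c \in x_idx w -> c \in post by move=> c; apply: mem_subseq.
rewrite /Gw.
have -> : wx sx = wx pre ++ (inr a : letter) :: wx post by rewrite esx /wx map_cat.
rewrite [X in zip _ X]gaps_first; first last.
- by rewrite in_cons eqxx.
- apply/allP => l /mapP [c hc ->] /=; rewrite in_cons mem_inr negb_or; apply/andP; split.
    by apply/eqP => -[e]; rewrite -e hc in hapre.
  by apply/negP => /hwpost hcp; move: (hpp c hcp); rewrite hc.
rewrite size_map hpre.
have -> : gaps (fun l => l \in (inr a : letter) :: w) (wx post) = gaps (fun l => l \in w) (wx post).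
  apply: eq_gaps => l /mapP [c hc ->]; rewrite in_cons.
  have -> : ((inr c : letter) == inr a) = false.
    by apply/eqP => -[e]; rewrite -e hc in hapost.
  by [].
have -> : gaps (fun l => l \in wx pre ++ (inr a : letter) :: wx post) ((inr a : letter) :: w) =
    0%N :: gaps (fun l => l \in wx pre ++ (inr a : letter) :: wx post) w.
  by rewrite /= mem_cat in_cons eqxx orbT.
rewrite /addhead /= add0n big_cons /=; congr (_ * _).
have -> : gaps (fun l => l \in wx pre ++ (inr a : letter) :: wx post) w = gaps (fun l => l \in wx post) w.
  apply: eq_gaps => -[c|c] hl.
    by rewrite !mem_inl !a_idx_cat /= !a_idx_wx.
  rewrite !mem_inr !x_idx_cat /= !x_idx_wx.
  have hc : c \in post by apply: hwpost; rewrite -mem_inr.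
  by rewrite hc mem_cat in_cons hc !orbT.
by rewrite -[X in zip X _]addhead0.
Qed.

Lemma sum_iota (F : nat -> R) n : \sum_(p <- iota 0 n) F p = \sum_(p < n) F p.
Proof. by rewrite -(big_mkord xpredT) /index_iota subn0. Qed.

Lemma Lw_sum k sa sx b g : uniq sa -> uniq sx ->
  \sum_(w <- Lw k sa sx) Fw b (wa sa) w * Gw g w (wx sx) = cc fc gc k b g (size sa) (size sx).
Proof.
elim: k sa sx b g => [|k IH] sa sx b g usa usx.
  by rewrite /= big_seq1 Fw_nil Gw_nil !size_map.
rewrite /= big_cons big_cat /= !big_allpairs_dep /= Fw_nil Gw_nil !size_map.
rewrite !sum_iota addrA; congr (_ + _ + _).
  apply: eq_bigr => -[p hp] _ /=.
  rewrite (eq_big_seq (fun w => fc p b * (Fw 0 (wa (drop p.+1 sa)) w * Gw g.+1 w (wx sx)))).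
    by rewrite -mulr_sumr IH ?drop_uniq // size_drop.
  move=> w hw; case/andP: (Lw_sub hw) => h1 h2.
  by rewrite Fw_inl // Gw_inl mulrA.
apply: eq_bigr => -[q hq] _ /=.
rewrite (eq_big_seq (fun w => gc g q * (Fw b.+1 (wa sa) w * Gw 0 w (wx (drop q.+1 sx))))).
  by rewrite -mulr_sumr IH ?drop_uniq // size_drop.
move=> w hw; case/andP: (Lw_sub hw) => h1 h2.
by rewrite Gw_inr // Fw_inr mulrCA.
Qed.

End Weights.

Lemma conv_cc (R : comUnitRingType) (fc gc : nat -> nat -> R) (f g : word -> word -> R) i j :
  is_multiplicative fc f -> is_multiplicative gc g ->
  conv f g (aword i) (xword j) = cc fc gc (i + j) 0 0 i j.
Proof.
move=> hf hg.
set L := Lw (i + j) (iota 0 i) (iota 0 j).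
have hI : Defs.interval (aword i) (xword j) = [set` L]%classic.
  apply/funext => w; apply/propext; rewrite interval_char; split => h.
    by case/andP: h => h1 h2; apply: Lw_complete; rewrite ?size_iota.
  exact: Lw_sub h.
rewrite /conv hI -fsbig_seq; last by apply: Lw_uniq; apply: iota_uniq.
have := Lw_sum fc gc (i + j) 0 0 (iota_uniq 0 i) (iota_uniq 0 j).
rewrite !size_iota => <-.
apply: eq_big_seq => w hw.
have : Defs.interval (aword i) (xword j) w by rewrite hI.
case=> h1 h2.
by rewrite (hf _ _ h1) (hg _ _ h2) /Fw /Gw !addhead0.
Qed.

Lemma coef00 (R : comUnitRingType) (A B : ser R) : (A * B) 0%N 0%N = A 0%N 0%N * B 0%N 0%N.
Proof. by rewrite /GRing.mul /= /ps_mul !big_ord1. Qed.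

Unset Implicit Arguments.

Theorem theorem5p2 (R : comUnitRingType)
    (hQ : forall n : nat, (n.+1)%:R \is a @GRing.unit R)
    (f g : word -> word -> R) (fc gc : nat -> nat -> R) :
  fc 0%N 0%N = 1 -> gc 0%N 0%N = 1 ->
  is_multiplicative fc f -> is_multiplicative gc g ->
  let F : series R := fc in
  let G : series R := gc in
  let FG : series R := fun i j => conv f g (aword i) (xword j) in
  let F0 : useries R := fun i => fc i 0%N in
  let G0 : useries R := fun j => gc 0%N j in
  let Ft := subst_y F (ushift G0) in
  let Gt := subst_x G (ushift F0) in
  ps_inv FG =
  ps_sub (ps_add (ps_inv (ps_mul Ft (lift_y G0)))
                 (ps_inv (ps_mul (lift_x F0) Gt)))
         (ps_inv (ps_mul (lift_x F0) (lift_y G0))).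
Proof.
move=> hf0 hg0 hf hg F G FG F0' G0' Ft Gt.
have eFG : (FG : ser R) = Pser fc gc 0.
  apply: ser_ext => i j; rewrite /FG /Pser; exact: conv_cc.
have eFt : (Ft : ser R) = SS fc (ushift (G0 gc)) 0.
  apply: ser_ext => n m; rewrite /Ft /SS /subst_y; apply: eq_bigr => k _; by rewrite add0n.
have eGt : (Gt : ser R) = TT gc (ushift (F0 fc)) 0.
  apply: ser_ext => n m; rewrite /Gt /TT /subst_x; apply: eq_bigr => k _; by rewrite add0n.
change (ps_inv (FG : ser R) =
  (ps_inv ((Ft : ser R) * ly G0') : ser R) + ps_inv (lx F0' * (Gt : ser R))
  - ps_inv (lx F0' * ly G0')).
have eF0 : lx F0' = lx (F0 fc) by [].
have eG0 : ly G0' = ly (G0 gc) by [].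
rewrite eFG eFt eGt eF0 eG0.
have hS0 : SS fc (ushift (G0 gc)) 0 0%N 0%N = 1 by rewrite /SS big_ord1 /= hf0 mulr1.
have hT0 : TT gc (ushift (F0 fc)) 0 0%N 0%N = 1 by rewrite /TT big_ord1 /= hg0 mulr1.
have hF00 : lx (F0 fc) 0%N 0%N = 1 by rewrite /lx /lift_x /= /F0 hf0.
have hG00 : ly (G0 gc) 0%N 0%N = 1 by rewrite /ly /lift_y /= /G0 hg0.
apply: ps_inv_uniq.
apply: (inv_comb (cc_key fc gc)).
- apply: ps_invP; apply: ser_inv_ex; by rewrite coef00 hS0 hG00 mulr1.
- apply: ps_invP; apply: ser_inv_ex; by rewrite coef00 hT0 hF00 mulr1.
- apply: ps_invP; apply: ser_inv_ex; by rewrite coef00 hF00 hG00 mulr1.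
Qed.
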